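(* Let $S$ be epsilon-strongly graded and let $r$ be a minimal element of $B(\mathcal{E}_G)^*$. Then the following are equivalent: (i) $r$ is $\gamma$-invariant, i.e. $\gamma_g(r\epsilon_{g^{-1}})=r\epsilon_g$ for all $g\in G$; (ii) $r\in Z(S)$; (iii) $N(r)=\{g\in G: r\epsilon_g=r\}$ is a subgroup of $G$.
   Context: $G$ is a group with identity $e$; $S=\bigoplus_{g\in G}S_g$ is an associative unital ring graded by $G$, $R=S_e$, $XY$ denotes finite sums of products. $S$ is epsilon-strongly graded: for each $g\in G$ the ideal $S_gS_{g^{-1}}$ of $R$ has an identity element $\epsilon_g$ satisfying $\epsilon_gs=s=s\epsilon_{g^{-1}}$ for all $s\in S_g$; $\epsilon_e=1_S$. Each $\epsilon_g$ is an idempotent in the center $Z(R)$ of $R$. For each $g$ fix $n_g\in\mathbb{N}$, $u_g^{(i)}\in S_g$, $v_{g^{-1}}^{(i)}\in S_{g^{-1}}$ with $\sum_{i=1}^{n_g}u_g^{(i)}v_{g^{-1}}^{(i)}=\epsilon_g$ (with $n_e=1$, $u_e^{(1)}=v_e^{(1)}=1$), and define $\gamma_g:S\to S$, $\gamma_g(s)=\sum_{i=1}^{n_g}u_g^{(i)}sv_{g^{-1}}^{(i)}$. $\mathcal{E}_G=\{\epsilon_g:g\in G\}$, $B(\mathcal{E}_G)$ is the multiplicative (Boolean) semigroup generated by $\mathcal{E}_G$, and $B(\mathcal{E}_G)^*=B(\mathcal{E}_G)\setminus\{0\}$, partially ordered by $a\le b$ iff $a=ab$. $Z(S)$ denotes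 the center of $S$. *)

(* Defs.v *)
From mathcomp Require Import all_boot all_algebra.
Set Implicit Arguments. Unset Strict Implicit. Unset Printing Implicit Defensive.
Import GRing.Theory.
Local Open Scope ring_scope.

Record group := Group {
  gcar :> Type;
  gmul : gcar -> gcar -> gcar;
  ginv : gcar -> gcar;
  gone : gcar;
  gmulA : forall x y z, gmul x (gmul y z) = gmul (gmul x y) z;
  gmul1 : forall x, gmul gone x = x /\ gmul x gone = x;
  gmulV : forall x, gmul x (ginv x) = gone /\ gmul (ginv x) x = gone
}.

Section Graded.
Variables (G : group) (S : pzRingType).

Definition is_graded (Sg : G -> S -> Prop) : Prop :=
  (forall g, Sg g 0 /\ forall x y, Sg g x -> Sg g y -> Sg g (x - y)) /\
  (forall g h x y, Sg g x -> Sg h y -> Sg (gmul g h) (x * y)) /\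
  (forall s, exists n (gs : 'I_n -> G) (xs : 'I_n -> S),
      (forall i, Sg (gs i) (xs i)) /\ s = \sum_(i < n) xs i) /\
  (forall n (gs : 'I_n -> G) (xs : 'I_n -> S),
      (forall i j, gs i = gs j -> i = j) ->
      (forall i, Sg (gs i) (xs i)) -> \sum_(i < n) xs i = 0 ->
      forall i, xs i = 0).

Definition prodset (X Y : S -> Prop) (z : S) : Prop :=
  exists n (xs ys : 'I_n -> S), (forall i, X (xs i) /\ Y (ys i)) /\
    z = \sum_(i < n) xs i * ys i.

Definition eps_strongly_graded (Sg : G -> S -> Prop) (eps : G -> S) : Prop :=
  is_graded Sg /\
  forall g,
    prodset (Sg g) (Sg (ginv g)) (eps g) /\
    (forall x, prodset (Sg g) (Sg (ginv g)) x -> eps g * x = x /\ x * eps g = x) /\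
    (forall s, Sg g s -> eps g * s = s /\ s * eps (ginv g) = s).

Definition gamma (nn : G -> nat) (u v : forall g, 'I_(nn g) -> S) (g : G) (s : S) : S :=
  \sum_(i < nn g) u g i * s * v g i.

(* B(E_G): multiplicative semigroup generated by {eps g | g in G} *)
Definition inB (eps : G -> S) (x : S) : Prop :=
  exists n (gs : 'I_n.+1 -> G), x = \prod_(i < n.+1) eps (gs i).

Definition inBstar (eps : G -> S) (x : S) : Prop := inB eps x /\ x <> 0.

Definition Ble (a b : S) : Prop := a = a * b.

Definition minimal_Bstar (eps : G -> S) (r : S) : Prop :=
  inBstar eps r /\ forall a, inBstar eps a -> Ble a r -> a = r.

Definition in_center (r : S) : Prop := forall s : S, r * s = s * r.

Definition is_subgroup (H : G -> Prop) : Prop :=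
  H (gone G) /\ (forall x y, H x -> H y -> H (gmul x y)) /\
  (forall x, H x -> H (ginv x)).

End Graded.

(* Main.v *)
Require Import Defs.
From mathcomp Require Import all_boot all_algebra.
Import GRing.Theory.
Local Open Scope ring_scope.

Lemma ginv_uniq (G : group) (x y : G) : gmul x y = gone G -> y = ginv x.
Proof.
move=> h; have [h1 _] := gmul1 y.
rewrite -h1 -(gmulV x).2 -gmulA h; by have [_ ->] := gmul1 (ginv x).
Qed.

Lemma ginvK (G : group) (g : G) : ginv (ginv g) = g.
Proof. symmetry; apply: ginv_uniq; exact: (gmulV g).2. Qed.

Lemma ginvM (G : group) (g h : G) : ginv (gmul g h) = gmul (ginv h) (ginv g).
Proof.
symmetry; apply: ginv_uniq.
by rewrite gmulA -(gmulA g h) (gmulV h).1 (gmul1 g).2 (gmulV g).1.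
Qed.

Lemma gmulVK (G : group) (g h : G) : gmul g (gmul (ginv g) h) = h.
Proof. by rewrite gmulA (gmulV g).1 (gmul1 h).1. Qed.

Arguments ginv_uniq {G}.
Arguments ginvK {G}.
Arguments ginvM {G}.
Arguments gmulVK {G}.

Theorem mainTheorem8 (G : group) (S : pzRingType)
  (Sg : G -> S -> Prop) (eps : G -> S)
  (Heps : eps_strongly_graded Sg eps)
  (nn : G -> nat) (u v : forall g : G, 'I_(nn g) -> S)
  (Hu : forall g i, Sg g (u g i))
  (Hv : forall g i, Sg (ginv g) (v g i))
  (Huv : forall g, \sum_(i < nn g) u g i * v g i = eps g)
  (He : nn (gone G) = 1%N /\
        forall i, u (gone G) i = 1 /\ v (gone G) i = 1)
  (r : S) (Hr : minimal_Bstar eps r) :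
  ((forall g : G, gamma u v g (r * eps (ginv g)) = r * eps g) <-> in_center r) /\
  (in_center r <-> is_subgroup (fun g : G => r * eps g = r)).
Proof.
have [[Hsub [Hmul [Hsum _]]] Heg] := Heps.
have Sg0 : forall g, Sg g 0 := fun g => (Hsub g).1.
have SgB : forall g x y, Sg g x -> Sg g y -> Sg g (x - y) := fun g => (Hsub g).2.
have SgD : forall g x y, Sg g x -> Sg g y -> Sg g (x + y).
  move=> g x y hx hy.
  have -> : x + y = x - (0 - y) by rewrite sub0r opprK.
  by apply: (SgB) => //; apply: (SgB).
have Sgsum : forall g m (F : 'I_m -> S), (forall i, Sg g (F i)) -> Sg g (\sum_(i<m) F i).
  move=> g m F hF; apply: (big_ind (Sg g)); [exact: Sg0 | exact: SgD | by []].
have Sgp : forall g x, prodset (Sg g) (Sg (ginv g)) x -> Sg (gone G) x.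
  move=> g x [m [xs [ys [hxy ->]]]]; apply: (Sgsum) => i.
  rewrite -(gmulV g).1; apply: (Hmul); apply hxy.
have epsE : forall g, Sg (gone G) (eps g) := fun g => Sgp g _ (Heg g).1.
have epsI : forall g, eps g * eps g = eps g := fun g => ((Heg g).2.1 _ (Heg g).1).1.
have actL : forall g s, Sg g s -> eps g * s = s := fun g s h => ((Heg g).2.2 s h).1.
have actR : forall g s, Sg g s -> s * eps (ginv g) = s := fun g s h => ((Heg g).2.2 s h).2.
have actR' : forall g s, Sg (ginv g) s -> s * eps g = s.
  by move=> g s h; rewrite -(ginvK g); exact: actR.
have eps1 : eps (gone G) = 1.
  case: He => Hn H1; rewrite -(Huv (gone G)) (eq_bigr (fun _ => 1)); last first.
    by move=> i _; rewrite (H1 i).1 (H1 i).2 mulr1.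
  by rewrite sumr_const card_ord Hn.
have centR : forall g x, Sg (gone G) x -> eps g * x = x * eps g.
  move=> g x hx; have [m [xs [ys [hxy Heq]]]] := (Heg g).1.
  have e1 : x * eps g = eps g * x * eps g.
    rewrite {1}Heq {2}Heq !mulr_sumr; apply eq_bigr => i _.
    rewrite !mulrA -(mulrA (eps g) x) actL //.
    have := Hmul _ _ _ _ hx (hxy i).1; by rewrite (gmul1 g).1.
  have e2 : eps g * x = eps g * x * eps g.
    rewrite {1}Heq mulr_suml {1}Heq !mulr_suml; apply eq_bigr => i _.
    rewrite -!mulrA [ys i * (x * _)]mulrA actR' //.
    have := Hmul _ _ _ _ (hxy i).2 hx; by rewrite (gmul1 _).2.
  by rewrite e1.
have shift : forall g h s, Sg g s -> s * eps h = eps (gmul g h) * s.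
  move=> g h s hs.
  have [m [a [b [hab Ha]]]] := (Heg h).1.
  have [m' [c [d [hcd Hc]]]] := (Heg (gmul g h)).1.
  have e1 : s * eps h = eps (gmul g h) * (s * eps h).
    rewrite Ha !mulr_sumr; apply eq_bigr => i _.
    rewrite !mulrA -(mulrA (eps _) s) actL //; exact: (Hmul _ _ _ _ hs (hab i).1).
  have e2 : eps (gmul g h) * s = eps (gmul g h) * s * eps h.
    rewrite Hc !mulr_suml; apply eq_bigr => i _.
    rewrite -!mulrA (mulrA (d i) s) actR' //.
    have := Hmul _ _ _ _ (hcd i).2 hs.
    by rewrite ginvM -gmulA (gmulV g).2 (gmul1 _).2.
  by rewrite e2 -mulrA -e1.
case: Hr => [[[n [gs Hr0]] Hrnz] Hmin].
pose Pb x := Sg (gone G) x /\ (forall y, Sg (gone G) y -> x * y = y * x) /\ x * x = x.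
have prodP : forall (I : Type) (l : seq I) (P : pred I) (F : I -> G), Pb (\prod_(i <- l | P i) eps (F i)).
  move=> I l P F; apply: (big_ind Pb).
  - split; first by rewrite -eps1; exact: epsE.
    by split; [move=> y _; rewrite mul1r mulr1 | rewrite mulr1].
  - move=> x y [hx [cx ix]] [hy [cy iy]]; split.
      rewrite -(gmul1 (gone G)).1; exact: Hmul.
    split.
      by move=> z hz; rewrite -mulrA (cy z hz) mulrA (cx z hz) -mulrA.
    by rewrite -mulrA (mulrA y x) -(cx y hy) -mulrA iy mulrA ix.
  - move=> i _; split; first exact: epsE.
    by split; [move=> y hy; exact: centR | exact: epsI].
have [rE [rC rI]] : Pb r by rewrite Hr0; apply: (prodP).
have lk : forall (l : seq 'I_n.+1) (h : 'I_n.+1), h \in l -> (\prod_(x <- l) eps (gs x)) * eps (gs h) = \prod_(x <- l) eps (gs x).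
  elim=> [//|a l IH] h; rewrite in_cons big_cons; case/orP => [/eqP ->|hl].
    have [_ [c _]] := prodP _ l xpredT gs.
    by rewrite -mulrA c ?epsE // mulrA epsI.
  by rewrite -mulrA IH.
have Bc : forall g, r * eps g = eps g * r := fun g => rC _ (epsE g).
have rk : forall i, r * eps (gs i) = r.
  by move=> i; rewrite Hr0; apply: lk; rewrite mem_index_enum.
have dich : forall g, r * eps g = 0 \/ r * eps g = r.
  move=> g; case: (eqVneq (r * eps g) 0) => [->|hne]; [by left | right].
  apply: (Hmin); last by rewrite /Ble -mulrA -Bc mulrA rI.
  split; last by apply/eqP.
  exists n.+1, (fun i : 'I_n.+2 => if (val i < n.+1)%N then gs (inord i) else g).
  rewrite big_ord_recr /= ltnn Hr0; congr (_ * _); apply: eq_bigr => i _.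
  by rewrite /= ltn_ord inord_val.
have homog : (forall g x, Sg g x -> r * x = x * r) -> forall s, r * s = s * r.
  move=> H s; have [m [gs' [xs [hx ->]]]] := Hsum s.
  rewrite mulr_sumr mulr_suml; apply eq_bigr => i _; exact: H _ _ (hx i).
rewrite /in_center /is_subgroup; split; split.
- move=> Hinv; apply homog => g x hx.
  have := Hinv g; rewrite /gamma => Hg.
  rewrite -{1}(actL g x hx) mulrA -Hg mulr_suml.
  set c := r * eps (ginv g).
  have cC : forall y, Sg (gone G) y -> c * y = y * c.
    by move=> y hy; rewrite /c -mulrA centR // mulrA rC // -mulrA.
  have -> : \sum_(i < nn g) u g i * c * v g i * x = \sum_(i < nn g) u g i * v g i * x * c.
    apply eq_bigr => i _; rewrite -(mulrA (u g i) c) -(mulrA (u g i)) -(mulrA c) cC; first by rewrite !mulrA.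
    have := Hmul _ _ _ _ (Hv g i) hx; by rewrite (gmulV g).2.
  by rewrite -!mulr_suml Huv actL // /c Bc mulrA actR.
- move=> Hc g; rewrite /gamma.
  transitivity (\sum_(i < nn g) r * (u g i * v g i)).
    apply eq_bigr => i _.
    by rewrite -mulrA -(mulrA r) actL // mulrA -Hc -mulrA.
  by rewrite -mulr_sumr Huv.
- move=> Hc; split; first by rewrite eps1 mulr1.
  split.
  + move=> g h hg hh; case: (dich (gmul g h)) => // H0; exfalso; apply: (Hrnz).
    have e1 : r = \sum_(i < nn g) u g i * (r * eps h) * v g i.
      rewrite -{1}hg -Huv mulr_sumr; apply eq_bigr => i _.
      by rewrite hh mulrA Hc.
    rewrite e1; apply: big1 => i _.
    have e2 : r * eps h = \sum_(j < nn h) r * u h j * v h j.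
      by rewrite -Huv mulr_sumr; apply eq_bigr => j _; rewrite mulrA.
    rewrite e2 mulr_sumr mulr_suml; apply: big1 => j _.
    have hs : Sg (gmul g h) (u g i * u h j) := Hmul _ _ _ _ (Hu g i) (Hu h j).
    rewrite !mulrA -(Hc (u g i)) -(mulrA r) -(actL _ _ hs) mulrA H0.
    by rewrite !mul0r.
  + move=> g hg; case: (dich (ginv g)) => // H0; exfalso; apply: (Hrnz).
    rewrite -hg -Huv mulr_sumr big1 // => i _.
    rewrite -(actR _ _ (Hu g i)) (mulrA r) Hc -(mulrA (u g i)) -Bc H0.
    by rewrite mulr0 mul0r.
- case=> [_ [HM HV]]; apply homog => g x hx.
  case: (dich g) => hg.
  + have hg' : r * eps (ginv g) = 0.
      case: (dich (ginv g)) => // h1; exfalso; apply: (Hrnz).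
      have := HV _ h1; rewrite ginvK hg; by move=> <-.
    have -> : r * x = 0 by rewrite -(actL _ _ hx) mulrA hg mul0r.
    by rewrite -(actR _ _ hx) -mulrA -Bc hg' mulr0.
  + set P := \prod_(i < n.+1) eps (gmul g (gs i)).
    set Q := \prod_(i < n.+1) eps (gmul (ginv g) (gs i)).
    have sP : x * r = P * x.
      rewrite Hr0 /P; apply: (big_ind2 (fun a b => x * a = b * x)).
      - by rewrite mul1r mulr1.
      - move=> a1 a2 b1 b2 h1 h2.
        by rewrite mulrA h1 -mulrA h2 mulrA.
      - move=> i _; exact: shift.
    have rQ : r * x = x * Q.
      rewrite Hr0 /Q; apply: (big_ind2 (fun a b => a * x = x * b)).
      - by rewrite mul1r mulr1.
      - move=> a1 a2 b1 b2 h1 h2.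
        by rewrite -mulrA h2 mulrA h1 -mulrA.
      - by move=> i _; rewrite (shift g) // gmulVK.
    have rP' : r * P = r.
      rewrite /P; apply: (big_ind (fun y => r * y = r)).
      - by rewrite mulr1.
      - by move=> a b ha hb; rewrite mulrA ha hb.
      - by move=> i _; apply: (HM) => //; exact: rk.
    have rQ' : r * Q = r.
      rewrite /Q; apply: (big_ind (fun y => r * y = r)).
      - by rewrite mulr1.
      - by move=> a b ha hb; rewrite mulrA ha hb.
      - by move=> i _; apply: (HM); [exact: HV | exact: rk].
    have QE : Sg (gone G) Q by case: (prodP _ (index_enum 'I_n.+1) xpredT (fun i => gmul (ginv g) (gs i))).
    transitivity (r * x * r).
      by rewrite -{1}rP' -mulrA -sP mulrA.
    by rewrite rQ -mulrA -(rC _ QE) rQ'.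
Qed.
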